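(* Let $\sigma\colon\mathcal{A}^+\to\mathcal{B}^+$ be a morphism, $u,v\in\mathcal{A}^+$, let $a,b$ be the first letters of $u,v$ respectively, and let $\sigma(a)=st$ with $t$ nonempty (and $s$ possibly empty). Assume that $\sigma(u)$ is a prefix of $s\sigma(v)$, that $|u|\ge|\sigma|_1+|s|$, and that either ($s$ is empty and $a\neq b$) or $s$ is nonempty. Then there exist an alphabet $\mathcal{C}$ and morphisms $q\colon\mathcal{A}^+\to\mathcal{C}^+$, $p\colon\mathcal{C}^+\to\mathcal{B}^+$ such that $\#\mathcal{C}\le\#\mathcal{A}$, $q$ is letter-onto, $|p|_1<|\sigma|_1$, and $\sigma=pq$.
   Context: Alphabets are finite sets; $\mathcal{A}^+$ is the free semigroup of nonempty finite words over $\mathcal{A}$; a morphism is a semigroup homomorphism. For a morphism $\sigma\colon\mathcal{A}^+\to\mathcal{B}^+$, $|\sigma|_1=\sum_{a\in\mathcal{A}}|\sigma(a)|$. A word $w$ is a prefix of $w'$ if $w'=wr$ for some possibly empty word $r$. $q$ is letter-onto if every letter of its target alphabet occurs in some $q(a)$. *)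

(* Defs.v *)
(* Alphabets = finTypes; nonempty words = nonempty seqs;
   a morphism A^+ -> B^+ is given by its images of letters (each nonempty),
   extended to words by concatenation. *)
From mathcomp Require Import all_boot.
Set Implicit Arguments. Unset Strict Implicit. Unset Printing Implicit Defensive.

Definition is_morph (A B : finType) (f : A -> seq B) : Prop :=
  forall a, f a != [::].

Definition mext (A B : finType) (f : A -> seq B) (w : seq A) : seq B :=
  flatten (map f w).

Definition norm1 (A B : finType) (f : A -> seq B) : nat :=
  \sum_(a : A) size (f a).

Definition is_prefix (B : Type) (w w' : seq B) : Prop :=
  exists r, w' = w ++ r.

Definition letter_onto (A C : finType) (q : A -> seq C) : Prop :=
  forall c : C, exists a : A, c \in q a.

(* Main.v *)
Require Import Defs.
From mathcomp Require Import all_boot.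
From mathcomp Require Import zify.
Set Implicit Arguments. Unset Strict Implicit. Unset Printing Implicit Defensive.
Lemma mext_cons (A B : finType) (f : A -> seq B) x w : mext f (x :: w) = f x ++ mext f w.
Proof. by []. Qed.
Lemma mext_cat (A B : finType) (f : A -> seq B) w1 w2 : mext f (w1 ++ w2) = mext f w1 ++ mext f w2.
Proof. by rewrite /mext map_cat flatten_cat. Qed.
Lemma mext_comp (A A' B : finType) (r : A -> seq A') (f : A' -> seq B) w :
  mext (fun x => mext f (r x)) w = mext f (mext r w).
Proof. by elim: w => [|x w IH] //; rewrite !mext_cons IH mext_cat. Qed.
Lemma size_mext (A B : finType) (f : A -> seq B) w : is_morph f -> size w <= size (mext f w).
Proof.
move=> Hf; elim: w => [|x w IH] //; rewrite mext_cons size_cat /=.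
have : 0 < size (f x) by rewrite lt0n size_eq0 Hf.
lia.
Qed.

Lemma compose_m (A A' C : finType) (r : A -> seq A') (q : A' -> seq C) :
  is_morph r -> is_morph q -> letter_onto r -> letter_onto q ->
  is_morph (fun x => mext q (r x)) /\ letter_onto (fun x => mext q (r x)).
Proof.
move=> Hr Hq Or Oq; split.
  move=> x; case E: (r x) => [|y w]; first by move: (Hr x); rewrite E.
  by rewrite mext_cons; case E2: (q y) => [|z w2] //; move: (Hq y); rewrite E2.
move=> c; case: (Oq c) => y Hy; case: (Or y) => x Hx; exists x.
by apply/flatten_mapP; exists y.
Qed.

Lemma comparable (T : Type) (x y X Y : seq T) : x ++ X = y ++ Y ->
  (exists w, y = x ++ w) \/ (exists w, x = y ++ w).
Proof.
elim: x y => [|c x IH] [|d y] /=; try by [left; exists (d :: y) | left; exists [::] | right; exists (c :: x)].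
case=> -> /IH [[w ->]|[w ->]]; [left|right]; by exists w.
Qed.

Lemma prefix_cancel (T : Type) (x X Y : seq T) : is_prefix (x ++ X) (x ++ Y) -> is_prefix X Y.
Proof. by case=> r; rewrite -catA => /(congr1 (drop (size x))); rewrite !drop_size_cat // => ->; exists r. Qed.

Lemma sum_one (A : finType) (f g : A -> nat) (a : A) :
  (forall x, x != a -> f x = g x) ->
  \sum_(x : A) f x + g a = \sum_(x : A) g x + f a.
Proof.
move=> H; rewrite (bigD1 a) //= [X in _ = X + _](bigD1 a) //=.
rewrite (eq_bigr g) => [|x /H //]; lia.
Qed.


Lemma merge (A B : finType) (sigma : A -> seq B) (a b : A) :
  b != a -> sigma a = sigma b -> is_morph sigma ->
  exists (C : finType) (q : A -> seq C) (p : C -> seq B),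
    [/\ is_morph q /\ is_morph p, #|C| < #|A|, letter_onto q,
        norm1 p < norm1 sigma &
        forall w : seq A, mext sigma w = mext p (mext q w)].
Proof.
move=> Hba Eab Hs.
pose C := {x in predC1 a}.
have bC : b \in predC1 a by [].
pose sb : C := Sub b bC.
exists C, (fun x => [:: insubd sb x]), (fun c => sigma (val c)); split.
- by split => // c; apply: Hs.
- rewrite card_sig.
  have -> : #|[pred x | x \in predC1 a]| = #|predC1 a| by apply: eq_card.
  rewrite cardC1; have : 0 < #|A| by apply/card_gt0P; exists a.
  lia.
- by move=> c; exists (val c); rewrite valKd mem_seq1.
- rewrite /norm1 -(big_sub (predC1 a) (fun x => size (sigma x))) [X in _ < X](bigD1 a) //=.
  have : 0 < size (sigma a) by rewrite lt0n size_eq0 Hs.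
  rewrite (@eq_bigl _ _ _ _ _ (mem (predC1 a)) (fun i => i != a)) //; lia.
- elim=> [|x w IH] //; rewrite !mext_cons IH /=; congr (_ ++ _).
  rewrite val_insubd; case: (eqVneq x a) => [->|H] /=; first by rewrite inE eqxx /= Eab.
  by rewrite inE H.
Qed.

Definition concl (A B : finType) (sigma : A -> seq B) :=
  exists (C : finType) (q : A -> seq C) (p : C -> seq B),
    [/\ is_morph q /\ is_morph p, #|C| < #|A|, letter_onto q,
        norm1 p < norm1 sigma &
        forall w : seq A, mext sigma w = mext p (mext q w)].

Lemma mext_nil (A B : finType) (f : A -> seq B) : mext f [::] = [::].
Proof. by []. Qed.

Lemma step (A B : finType) (sigma tau : A -> seq B) (rho : A -> seq A) :
  is_morph rho -> letter_onto rho -> norm1 tau < norm1 sigma ->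
  (forall w, mext sigma w = mext tau (mext rho w)) -> concl tau -> concl sigma.
Proof.
move=> Hr Or Hlt Hc [C [q [p [[Hq Hp] Hcard Oq Hn Hpq]]]].
have [Hm Ho] := @compose_m _ _ _ _ _ Hr Hq Or Oq.
exists C, (fun x => mext q (rho x)), p; split => //.
  lia.
by move=> w; rewrite Hc Hpq mext_comp.
Qed.

Lemma L (n : nat) (A B : finType) (sigma : A -> seq B) (u v : seq A) (a b : A) :
  norm1 sigma <= n -> is_morph sigma ->
  ohead u = Some a -> ohead v = Some b -> a != b ->
  is_prefix (mext sigma u) (mext sigma v) ->
  norm1 sigma <= size u -> concl sigma.
Proof.
elim: n A B sigma u v a b => [|n IH] A B sigma u v a b.
  move=> H0 Hs; have Ha : 0 < size (sigma a) by rewrite lt0n size_eq0 Hs.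
  have : size (sigma a) <= norm1 sigma by rewrite /norm1 (bigD1 a) //=; lia.
  lia.
move=> Hn Hs.
case: u => [|a' u'] //= [->]; case: v => [|b' v'] //= [->] Hab Hpre Hsz.
have Hpre0 := Hpre; case: Hpre0 => r; rewrite !mext_cons -catA => /esym /comparable.
have Hsum : forall c, size (sigma c) <= norm1 sigma by move=> c; rewrite /norm1 (bigD1 c) //=; lia.
move=> [[w Ew]|[w Ew]].
-
  case: (eqVneq w [::]) => [w0|wn0].
  + by apply: (merge (a := b) (b := a)) => //; rewrite Ew w0 cats0.
  + pose tau x := if x == b then w else sigma x.
    pose rho x := if x == b then [:: a; b] else [:: x].
    have tau_b : tau b = w by rewrite /tau eqxx.
    have tau_ne : forall x, x != b -> tau x = sigma x by move=> x Hx; rewrite /tau (negbTE Hx).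
    have rho_b : rho b = [:: a; b] by rewrite /rho eqxx.
    have rho_ne : forall x, x != b -> rho x = [:: x] by move=> x Hx; rewrite /rho (negbTE Hx).
    have Ht : is_morph tau by move=> x; rewrite /tau; case: ifP.
    have Hr : is_morph rho by move=> x; rewrite /rho; case: ifP.
    have Or : letter_onto rho by move=> x; exists x; rewrite /rho; case: ifP => [/eqP ->|_]; rewrite !inE eqxx ?orbT.
    have Hw : 0 < size w by rewrite lt0n size_eq0.
    have Hlt : norm1 tau < norm1 sigma.
      have E : norm1 tau + size (sigma b) = norm1 sigma + size (tau b).
        by apply: sum_one => x Hx; rewrite /tau (negbTE Hx).
      move: E; rewrite {2}/tau eqxx Ew size_cat.
      have : 0 < size (sigma a) by rewrite lt0n size_eq0 Hs.
      lia.
    have Hc : forall w0, mext sigma w0 = mext tau (mext rho w0).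
      elim=> [|x w0 IHw] //; rewrite !mext_cons mext_cat IHw; congr (_ ++ _).
      case: (eqVneq x b) => [->|Hxb].
        by rewrite rho_b !mext_cons mext_nil tau_b (tau_ne _ Hab) cats0 Ew.
      by rewrite (rho_ne _ Hxb) mext_cons mext_nil cats0 (tau_ne _ Hxb).
    apply: (step Hr Or Hlt Hc).
    case: u' Hpre Hsz => [|u2 u''] Hpre Hsz.
      have := Hsum b; rewrite Ew size_cat.
      have : 0 < size (sigma a) by rewrite lt0n size_eq0 Hs.
      move: Hsz => /=; lia.
    apply: (IH _ _ tau (mext rho (u2 :: u'')) (b :: mext rho v') (if u2 == b then a else u2) b).
    * lia.
    * exact: Ht.
    * by rewrite mext_cons; case: (eqVneq u2 b) => [->|H]; rewrite ?eqxx ?rho_b ?(rho_ne _ H) ?(negbTE H).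
    * by [].
    * by case: (eqVneq u2 b) => [_|H].
    * have := Hpre; rewrite !Hc (mext_cons rho a) (rho_ne _ Hab) (mext_cons rho b) rho_b.
      rewrite -[[:: a] ++ _]/(a :: _) -[[:: a; b] ++ _]/(a :: b :: _) !mext_cons.
      by move/prefix_cancel.
    * have := size_mext (u2 :: u'') Hr; move: Hsz => /=; lia.
- case: (eqVneq w [::]) => [w0|wn0].
  + by apply: (merge (a := a) (b := b)) => //; [rewrite eq_sym | rewrite Ew w0 cats0].
  + pose tau x := if x == a then w else sigma x.
    pose rho x := if x == a then [:: b; a] else [:: x].
    have Hba : b != a by rewrite eq_sym.
    have tau_a : tau a = w by rewrite /tau eqxx.
    have tau_ne : forall x, x != a -> tau x = sigma x by move=> x Hx; rewrite /tau (negbTE Hx).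
    have rho_a : rho a = [:: b; a] by rewrite /rho eqxx.
    have rho_ne : forall x, x != a -> rho x = [:: x] by move=> x Hx; rewrite /rho (negbTE Hx).
    have Ht : is_morph tau by move=> x; rewrite /tau; case: ifP.
    have Hr : is_morph rho by move=> x; rewrite /rho; case: ifP.
    have Or : letter_onto rho by move=> x; exists x; rewrite /rho; case: ifP => [/eqP ->|_]; rewrite !inE eqxx ?orbT.
    have Hw : 0 < size w by rewrite lt0n size_eq0.
    have Hlt : norm1 tau < norm1 sigma.
      have E : norm1 tau + size (sigma a) = norm1 sigma + size (tau a).
        by apply: sum_one => x Hx; rewrite /tau (negbTE Hx).
      move: E; rewrite {2}/tau eqxx Ew size_cat.
      have : 0 < size (sigma b) by rewrite lt0n size_eq0 Hs.
      lia.
    have Hc : forall w0, mext sigma w0 = mext tau (mext rho w0).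
      elim=> [|x w0 IHw] //; rewrite !mext_cons mext_cat IHw; congr (_ ++ _).
      case: (eqVneq x a) => [->|Hxa].
        by rewrite rho_a !mext_cons mext_nil tau_a (tau_ne _ Hba) cats0 Ew.
      by rewrite (rho_ne _ Hxa) mext_cons mext_nil cats0 (tau_ne _ Hxa).
    apply: (step Hr Or Hlt Hc).
    case: v' Hpre => [|v2 v''] Hpre.
      case: Hpre => r0 /(congr1 size); rewrite !mext_cons mext_nil !size_cat Ew size_cat /=.
      lia.
    apply: (IH _ _ tau (a :: mext rho u') (mext rho (v2 :: v'')) a (if v2 == a then b else v2)).
    * lia.
    * exact: Ht.
    * by [].
    * by rewrite mext_cons; case: (eqVneq v2 a) => [->|H]; rewrite ?eqxx ?rho_a ?(rho_ne _ H) ?(negbTE H).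
    * by case: (eqVneq v2 a) => [_|H] //; rewrite eq_sym.
    * have := Hpre; rewrite !Hc (mext_cons rho a) rho_a (mext_cons rho b) (rho_ne _ Hba).
      rewrite -[[:: b; a] ++ _]/(b :: a :: _) -[[:: b] ++ _]/(b :: _) !mext_cons.
      by move/prefix_cancel.
    * have := size_mext u' Hr; move: Hsz => /=; lia.
Qed.

Lemma sum_option (A : finType) (F : option A -> nat) :
  \sum_(o : option A) F o = F None + \sum_(x : A) F (Some x).
Proof.
rewrite (bigD1 None) //=; congr (_ + _).
rewrite (reindex_omap Some id) //=; last by case.
by apply: eq_bigl => x; rewrite /= eqxx.
Qed.

Theorem lemma3p4 (A B : finType) (sigma : A -> seq B) (u v : seq A) (a b : A)
    (s t : seq B) :
  is_morph sigma ->
  ohead u = Some a -> ohead v = Some b ->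
  sigma a = s ++ t -> t != [::] ->
  is_prefix (mext sigma u) (s ++ mext sigma v) ->
  norm1 sigma + size s <= size u ->
  ((s = [::] /\ a != b) \/ s != [::]) ->
  exists (C : finType) (q : A -> seq C) (p : C -> seq B),
    [/\ is_morph q /\ is_morph p, #|C| <= #|A|, letter_onto q,
        norm1 p < norm1 sigma &
        forall w : seq A, mext sigma w = mext p (mext q w)].
Proof.
move=> Hs Hu Hv Est tn0 Hpre Hsz [[s0 Hab]|sn0].
  move: Hpre Hsz; rewrite s0 /= addn0 => Hpre Hsz.
  have [C [q [p [Hm Hc Ho Hn Heq]]]] := L (leqnn _) Hs Hu Hv Hab Hpre Hsz.
  by exists C, q, p; split => //; apply: ltnW.
case: u Hu Hpre Hsz => [|a' u'] //= [->] Hpre Hsz.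
case: v Hv Hpre => [|b0 v'] //= [->] Hpre.
pose tau (o : option A) := match o with None => s | Some x => if x == a then t else sigma x end.
pose rho x := if x == a then [:: None; Some a] else [:: Some x].
have rho_a : rho a = [:: None; Some a] by rewrite /rho eqxx.
have rho_ne : forall x, x != a -> rho x = [:: Some x] by move=> x Hx; rewrite /rho (negbTE Hx).
have tau_a : tau (Some a) = t by rewrite /tau eqxx.
have tau_ne : forall x, x != a -> tau (Some x) = sigma x by move=> x Hx; rewrite /tau (negbTE Hx).
have Ht : is_morph tau by case => [x|] //=; case: ifP.
have Hr : is_morph rho by move=> x; rewrite /rho; case: ifP.
have Or : letter_onto rho.
  case => [x|]; last by exists a; rewrite rho_a inE eqxx.
  by exists x; rewrite /rho; case: ifP => [/eqP ->|_]; rewrite !inE eqxx ?orbT.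
have Hc : forall w0, mext sigma w0 = mext tau (mext rho w0).
  elim=> [|x w0 IHw] //; rewrite !mext_cons mext_cat IHw; congr (_ ++ _).
  case: (eqVneq x a) => [->|Hxa].
    by rewrite rho_a !mext_cons mext_nil tau_a cats0 Est.
  by rewrite (rho_ne _ Hxa) mext_cons mext_nil cats0 (tau_ne _ Hxa).
have Hnorm : norm1 tau = norm1 sigma.
  rewrite /norm1 sum_option.
  have E : \sum_(x : A) size (tau (Some x)) + size (sigma a) = \sum_(x : A) size (sigma x) + size (tau (Some a)).
    by apply: sum_one => x Hx; rewrite (tau_ne _ Hx).
  move: E; rewrite tau_a Est size_cat /=; lia.
have [C [q [p [[Hq Hp] Hcard Oq Hn Hpq]]]] :
    concl tau.
  apply: (L (u := Some a :: mext rho u') (v := mext rho (b :: v')) (a := Some a)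
            (b := if b == a then None else Some b) (leqnn _) Ht).
  - by [].
  - by rewrite mext_cons; case: (eqVneq b a) => [->|H]; rewrite ?eqxx ?rho_a ?(rho_ne _ H) ?(negbTE H).
  - by case: (eqVneq b a) => [_|H] //=; rewrite eqE /= eq_sym.
  - move: Hpre; rewrite !Hc (mext_cons rho a) rho_a.
    rewrite -[[:: None; Some a] ++ _]/(None :: Some a :: _) (mext_cons tau None) /=.
    by move/prefix_cancel.
  - have := size_mext u' Hr; move: Hsz => /=; lia.
have [Hm Ho] := @compose_m _ _ _ _ _ Hr Hq Or Oq.
exists C, (fun x => mext q (rho x)), p; split => //.
- by move: Hcard; rewrite card_option.
- by rewrite -Hnorm.
- by move=> w; rewrite Hc Hpq mext_comp.
Qed.
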